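(* Let $f\in\mathbb{C}[X,Y]$ be a quasi-convenient polynomial which is nondegenerate at infinity, and let $g,h\in\mathbb{C}[X,Y]$ be polynomials of positive degree that are coprime and both divide $f$ in $\mathbb{C}[X,Y]$. Then $g$ and $h$ are quasi-convenient and the pair $(g,h)$ is nondegenerate at infinity.
   Context: Write $f=\sum c_{\alpha\beta}X^\alpha Y^\beta\in\mathbb{C}[X,Y]$ and $\operatorname{supp} f=\{(\alpha,\beta)\in\mathbb{N}^2: c_{\alpha\beta}\neq 0\}$. A nonzero polynomial $f$ of positive degree is quasi-convenient if $c_{\alpha 0}\neq 0$ and $c_{0\beta}\neq 0$ for some integers $\alpha,\beta\ge 0$. For a nonzero real vector $\vec w=[p,q]$, let $d_{\vec w}(f)=\max\{p\alpha+q\beta:(\alpha,\beta)\in\operatorname{supp} f\}$ and $\operatorname{in}(f,\vec w)=\sum_{p\alpha+q\beta=d_{\vec w}(f)} c_{\alpha\beta}X^\alpha Y^\beta$. A quasi-convenient $f$ is nondegenerate at infinity if for every real vector $\vec w=[p,q]$ with $p>0$ or $q>0$ the system $\operatorname{in}(f,\vec w)=\frac{\partial}{\partial X}\operatorname{in}(f,\vec w)=\frac{\partial}{\partial Y}\operatorname{in}(f,\vec w)=0$ has no solutions in $\mathbb{C}^*\times\mathbb{C}^*$, where $\mathbb{C}^*=\mathbb{C}\setminus\{0\}$. A pair $(g,h)$ of quasi-convenient polynomials is nondegenerate at infinity if for every real vector $\vec w=[p,q]$ with $p>0$ or $q>0$ the system $\operatorname{in}(g,\vec w)=\operatorname{in}(h,\vec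 w)=0$ has no solutions in $\mathbb{C}^*\times\mathbb{C}^*$. *)

(* Defs.v *)
(* Bivariate polynomials C[X,Y] are {poly {poly C}} following
   mathcomp's polyXY convention: the OUTER variable is X ('X), the INNER
   variable is Y ('Y = 'X%:P), and p.[x, y] = p.[x%:P].[y]. *)
From HB Require Import structures.
From mathcomp Require Import all_boot all_order all_algebra polyXY.
Set Implicit Arguments. Unset Strict Implicit. Unset Printing Implicit Defensive.
Import Order.TTheory GRing.Theory Num.Theory.
Local Open Scope ring_scope.

Section Bivariate.
Variable C : numClosedFieldType.
Implicit Types f g h : {poly {poly C}}.

Definition xcoef f (a : nat) : {poly C} := f`_a.

Definition bcoef f (a b : nat) : C := (f`_a)`_b.

Definition tdeg f : nat :=
  (\max_(a < size f) \max_(b < size (xcoef f a) | bcoef f a b != 0%R) (a + b))%N.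

Definition quasi_convenient f : Prop :=
  f != 0 /\ (0 < tdeg f)%N /\
  (exists a : nat, bcoef f a 0 != 0) /\ (exists b : nat, bcoef f 0 b != 0).

Definition wdeg (p q : C) (a b : nat) : C := p * a%:R + q * b%:R.

Definition attains_max f (p q : C) (a b : nat) : bool :=
  \big[andb/true]_(a' < size f) \big[andb/true]_(b' < size (xcoef f a'))
     ((bcoef f a' b' != 0) ==> (wdeg p q a' b' <= wdeg p q a b)).

Definition init_form f (p q : C) : {poly {poly C}} :=
  \poly_(a < size f) \poly_(b < size (xcoef f a))
     (if (bcoef f a b != 0) && attains_max f p q a b then bcoef f a b else 0).

Definition dX f : {poly {poly C}} := f^`().
Definition dY f : {poly {poly C}} := map_poly (fun c : {poly C} => c^`()) f.

Definition weight_ok (p q : C) : Prop :=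
  p \is Num.real /\ q \is Num.real /\ (0 < p \/ 0 < q).

Definition nondeg_at_infinity f : Prop :=
  quasi_convenient f /\
  forall p q : C, weight_ok p q ->
    ~ exists x y : C, x != 0 /\ y != 0 /\
        (init_form f p q).[x, y] = 0 /\
        (dX (init_form f p q)).[x, y] = 0 /\
        (dY (init_form f p q)).[x, y] = 0.

Definition pair_nondeg_at_infinity g h : Prop :=
  quasi_convenient g /\ quasi_convenient h /\
  forall p q : C, weight_ok p q ->
    ~ exists x y : C, x != 0 /\ y != 0 /\
        (init_form g p q).[x, y] = 0 /\ (init_form h p q).[x, y] = 0.

Definition bdvd g f : Prop := exists k : {poly {poly C}}, f = k * g.
Definition bcoprime g h : Prop :=
  forall d : {poly {poly C}}, bdvd d g -> bdvd d h -> d \is a GRing.unit.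

End Bivariate.

(* Main.v *)
Require Import Defs.
From HB Require Import structures.
From mathcomp Require Import all_boot all_order all_algebra polyXY ring.
From Stdlib Require Import Classical_Prop.
Import Order.TTheory GRing.Theory Num.Theory.
Local Open Scope ring_scope.
Set Implicit Arguments. Unset Strict Implicit.

Section Alg.
Variable C : numClosedFieldType.
Local Notation P := {poly {poly C}}.

Definition evY (a : C) (A : P) : {poly C} := map_poly (horner_eval a) A.

Lemma evYM a A B : evY a (A * B) = evY a A * evY a B.
Proof. by rewrite /evY rmorphM. Qed.

Lemma evYC a s : evY a s%:P = (s.[a])%:P.
Proof. by rewrite /evY map_polyC. Qed.

Lemma evY0_div a A : evY a A = 0 -> exists A', A = A' * ('X - a%:P)%:P.
Proof.
move=> h0; exists (map_poly (fun c => c %/ ('X - a%:P)) A).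
apply/polyP => i; rewrite coefMC coef_map_id0 ?div0p //.
have : (evY a A)`_i = 0 by rewrite h0 coef0.
rewrite /evY coef_map /= horner_evalE => r.
by rewrite divpK // dvdp_XsubCl /root r.
Qed.

Lemma L_not_unit a : (('X - a%:P)%:P : P) \isn't a GRing.unit.
Proof. by rewrite poly_unitE coefC /= poly_unitE size_XsubC andbF. Qed.

Lemma XsubC_neq0 a : ('X - a%:P : {poly C}) != 0.
Proof. by rewrite -size_poly_eq0 size_XsubC. Qed.

Lemma cancel_prim (D : P) : (forall a, evY a D != 0) ->
  forall (s : {poly C}) (A B : P), s != 0 -> s%:P * A = D * B -> exists Q, A = Q * D.
Proof.
move=> pD s A B.
have key : forall n (s : {poly C}) (A B : P), (size s <= n)%N -> s != 0 ->
    s%:P * A = D * B -> exists Q, A = Q * D; last by apply: key.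
elim=> [|n IH] {}s {}A {}B.
  by rewrite leqn0 size_poly_eq0 => /eqP ->; rewrite eqxx.
move=> sz s0 e.
have [s1|s1] := eqVneq (size s) 1%N.
  have su : s \is a GRing.unit.
    rewrite poly_unitE s1 /= unitfE.
    have := lead_coef_eq0 s; rewrite lead_coefE s1 /= => ->; exact: s0.
  exists ((s^-1)%:P * B).
  rewrite -mulrA -[A]mul1r -[1](@polyC1 {poly C}) -(mulVr su) polyCM -mulrA e.
  by rewrite [D * B]mulrC.
have /closed_rootP [a ra] := s1.
have dv : ('X - a%:P) %| s by rewrite dvdp_XsubCl.
set s' := s %/ ('X - a%:P).
have es : s = s' * ('X - a%:P) by rewrite divpK.
have s'0 : s' != 0 by apply: contraNneq s0 => h; rewrite es h mul0r.
have : evY a (s%:P * A) = 0 by rewrite evYM evYC (rootP ra) mul0r.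
rewrite e evYM => /eqP; rewrite mulf_eq0 (negbTE (pD a)) /= => /eqP /evY0_div [B' eB].
have sz' : (size s' <= n)%N.
  move: sz; rewrite es size_mul // ?XsubC_neq0 // size_XsubC addn2 /=.
  by rewrite ltnS.
have e' : s'%:P * A = D * B'.
  apply: (mulIf (x := ('X - a%:P)%:P)); first by rewrite polyC_eq0 XsubC_neq0.
  by rewrite mulrAC -polyCM -es e eB mulrA.
exact: (IH s' A B' sz' s'0 e').
Qed.


Lemma frac_rep (R : idomainType) (x : {fraction R}) :
  exists n d : R, d != 0 /\ x * tofrac d = tofrac n.
Proof.
elim/quotW: x => r.
exists (\n_r), (\d_r); split; first exact: denom_ratioP.
unlock tofrac.
rewrite -[_ * _]/(FracField.mul _ _).
rewrite !piE. apply/eqmodP => /=. rewrite FracField.equivfE /FracField.mulf /=.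
rewrite !numden_Ratio ?oner_neq0 ?mulf_neq0 ?denom_ratioP // ?mulr1 ?mul1r ?oner_neq0 //.
  by rewrite mulrC.
all: exact: oner_neq0.
Qed.

Local Notation tf := (@tofrac {poly C}).
Local Notation F := (map_poly tf).

Lemma tf_inj : injective tf.
Proof. by move=> x y /eqP; rewrite tofrac_eq => /eqP. Qed.

Lemma F_inj : injective F.
Proof. apply: map_inj_poly; [exact: tf_inj | exact: rmorph0]. Qed.

Lemma prim_dec (A : P) : A != 0 -> exists c (D : P),
  c != 0 /\ (forall a, evY a D != 0) /\ A = c%:P * D.
Proof.
have key : forall n (A : P), (size (lead_coef A) < n)%N -> A != 0 -> exists c (D : P),
  c != 0 /\ (forall a, evY a D != 0) /\ A = c%:P * D; last first.
  by move=> A0; apply: (key (size (lead_coef A)).+1).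
elim=> [//|n IH] {}A sz A0.
case: (classic (exists a, evY a A = 0)) => [[a /evY0_div [A' eA]]|nr]; last first.
  exists 1, A; split; first exact: oner_neq0.
  split; last by rewrite mul1r.
  by move=> a; apply/eqP => h; apply: nr; exists a.
have A'0 : A' != 0 by apply: contraNneq A0 => h; rewrite eA h mul0r.
have [|c [D [c0 [pD eA']]]] := IH A' _ A'0.
  move: sz; rewrite eA lead_coefM lead_coefC size_mul ?lead_coef_eq0 ?XsubC_neq0 //.
  by rewrite size_XsubC addn2 ltnS.
exists (c * ('X - a%:P)), D; split; first by rewrite mulf_neq0 ?XsubC_neq0.
by split=> //; rewrite eA eA' polyCM; ring.
Qed.

Lemma clear_den (u : {poly {fraction {poly C}}}) :
  exists (r : {poly C}) (U : P), r != 0 /\ F U = (tf r)%:P * u.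
Proof.
elim/poly_ind: u => [|u c [r [U [r0 e]]]].
  by exists 1, 0; split; [exact: oner_neq0 | rewrite rmorph0 mulr0].
have [n [d [d0 ed]]] := frac_rep c.
exists (r * d), (d%:P * U * 'X + (r * n)%:P); split; first by rewrite mulf_neq0.
rewrite rmorphD !rmorphM /= !map_polyC /= map_polyX e ?rmorphM /= -ed.
rewrite !polyCM; clear e ed.
move: (tf d)%:P (tf r)%:P c%:P 'X u => D Rr Cc X v; ring.
Qed.

Lemma copK (g h : P) : g != 0 -> bcoprime g h -> coprimep (F g) (F h).
Proof.
move=> g0 cop; apply/negPn/negP => ncp; rewrite /coprimep in ncp.
set d := gcdp (F g) (F h) in ncp.
have Fg0 : F g != 0.
  by apply: contraNneq g0 => hh; apply/eqP; apply: F_inj; rewrite hh rmorph0.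
have d0 : d != 0 by rewrite gcdp_eq0 negb_and Fg0.
have [r [D0 [r0 eD0]]] := clear_den d.
have rF0 : tf r != 0 by rewrite tofrac_eq0.
have D00 : D0 != 0.
  apply: contraNneq d0 => h0; move: eD0; rewrite h0 rmorph0 => /esym/eqP.
  by rewrite mulf_eq0 polyC_eq0 (negbTE rF0) /= => /eqP ->.
have [c [D [c0 [pD eD]]]] := prim_dec D00.
have dv : forall G0 : P, d %| F G0 -> bdvd D G0.
  move=> G0 /dvdpP [qq eq].
  have [s [Q0 [s0 eQ]]] := clear_den qq.
  have e1 : Q0 * D0 = (s * r)%:P * G0.
    apply: F_inj; rewrite !rmorphM /= eQ eD0 !map_polyC /= eq.
    by rewrite mulrACA.
  have e2 : (s * r)%:P * G0 = D * (Q0 * c%:P).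
    by rewrite -e1 eD mulrA [D * _]mulrC.
  have [Q eQ'] := cancel_prim pD (mulf_neq0 s0 r0) e2.
  by exists Q.
have Du := cop D (dv g (dvdp_gcdl _ _)) (dv h (dvdp_gcdr _ _)).
move: Du; rewrite poly_unitE => /andP [/eqP sD _].
move: ncp; apply/negP; rewrite negbK.
have := congr1 (fun p : {poly _} => size p) eD0 => /=; rewrite size_map_inj_poly ?rmorph0 //; last exact: tf_inj.
by rewrite eD size_Cmul // sD size_Cmul ?polyC_eq0 // => <-.
Qed.

Lemma euclid n : forall (g h k m : P), (size (lead_coef h) < n)%N -> h != 0 ->
  g != 0 -> bcoprime g h -> k * g = m * h -> exists q, k = q * h.
Proof.
elim: n => [//|n IH] g h k m sz h0 g0 cop e.
case: (classic (exists a, evY a h = 0)) => [[a /evY0_div [h' eh]]|nr].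
  set L := (('X - a%:P)%:P : P) in eh.
  have L0 : L != 0 by rewrite polyC_eq0 XsubC_neq0.
  have ga : evY a g != 0.
    apply/eqP => /evY0_div [g' eg].
    have := cop L (ex_intro _ g' eg) (ex_intro _ h' eh).
    by rewrite (negbTE (L_not_unit a)).
  have ka : evY a k = 0.
    have := congr1 (evY a) e; rewrite !evYM eh evYM /L evYC hornerXsubC subrr.
    by rewrite mulr0 mulr0 => /eqP; rewrite mulf_eq0 (negbTE ga) orbF => /eqP.
  have [k' ek] := evY0_div ka.
  have e' : k' * g = m * h'.
    by apply: (mulIf L0); rewrite mulrAC -ek e eh mulrA.
  have h'0 : h' != 0 by apply: contraNneq h0 => hh; rewrite eh hh mul0r.
  have sz' : (size (lead_coef h') < n)%N.
    move: sz; rewrite eh lead_coefM lead_coefC size_mul ?lead_coef_eq0 ?XsubC_neq0 //.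
    by rewrite size_XsubC addn2 ltnS.
  have cop' : bcoprime g h'.
    move=> d dg [x ex]; apply: (cop d dg); exists (x * L).
    by rewrite eh ex mulrAC.
  have [q eq] := IH g h' k' m sz' h'0 g0 cop' e'.
  by exists q; rewrite ek eq eh mulrA.
have pH : forall a, evY a h != 0 by move=> a; apply/eqP => hh; apply: nr; exists a.
have /Bezout_eq1_coprimepP [[u1 u2] /= eu] := copK g0 cop.
have [r1 [U1 [r10 e1]]] := clear_den u1.
have [r2 [U2 [r20 e2]]] := clear_den u2.
have eB : r2%:P * U1 * g + r1%:P * U2 * h = (r1 * r2)%:P.
  apply: F_inj; rewrite !rmorphD !rmorphM /= !map_polyC /= e1 e2 -[RHS]mulr1 -eu.
  clear e1 e2 eu; move: (tf r1)%:P (tf r2)%:P u1 u2 (F g) (F h) => X1 X2 X3 X4 X5 X6.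
  ring.
have e3 : (r1 * r2)%:P * k = h * (r2%:P * U1 * m + r1%:P * U2 * k).
  rewrite -eB mulrDl.
  have -> : r2%:P * U1 * g * k = r2%:P * U1 * m * h.
    by rewrite -!mulrA [g * k]mulrC e.
  clear -r10; move: (r2%:P) (r1%:P) U1 U2 m h k => X1 X2 X3 X4 X5 X6 X7; ring.
have [q eq] := cancel_prim pH (mulf_neq0 r10 r20) e3.
by exists q.
Qed.

Lemma prod_dvd (f g h : P) : f != 0 -> bcoprime g h -> bdvd g f -> bdvd h f ->
  exists n, f = n * h * g.
Proof.
move=> f0 cop [k ek] [m em].
have g0 : g != 0 by apply: contraNneq f0 => hh; rewrite ek hh mulr0.
have h0 : h != 0 by apply: contraNneq f0 => hh; rewrite em hh mulr0.
have e : k * g = m * h by rewrite -ek -em.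
have [q eq] := euclid (n := (size (lead_coef h)).+1) (leqnn _) h0 g0 cop e.
by exists q; rewrite ek eq.
Qed.

End Alg.

Section Init.
Variable C : numClosedFieldType.
Local Notation P := {poly {poly C}}.
Implicit Types A B : P.

Lemma bcoefM A B a b : bcoef (A * B) a b =
  \sum_(i < a.+1) \sum_(j < b.+1) bcoef A i j * bcoef B (a - i) (b - j).
Proof.
rewrite /bcoef coefM coef_sum; apply: eq_bigr => i _; by rewrite coefM.
Qed.

Lemma beq A B : (forall a b, bcoef A a b = bcoef B a b) -> A = B.
Proof. by move=> h; apply/polyP => a; apply/polyP => b; apply: h. Qed.

Lemma bcoef_out A a b : bcoef A a b != 0 ->
  (a < size A)%N /\ (b < size (xcoef A a))%N.
Proof.
rewrite /bcoef /xcoef => nz; split.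
  by rewrite ltnNge; apply: contra nz => h; rewrite [A`_a]nth_default // coef0.
by rewrite ltnNge; apply: contra nz => h; rewrite nth_default.
Qed.

Lemma bcoef0 a b : bcoef (0 : P) a b = 0.
Proof. by rewrite /bcoef !coef0. Qed.

Lemma bcoef_nz_poly A a b : bcoef A a b != 0 -> A != 0.
Proof. by apply: contraNneq => ->; rewrite bcoef0. Qed.

Lemma poly_nz_bcoef A : A != 0 -> exists a b, bcoef A a b != 0.
Proof.
move=> A0; exists (size A).-1, (size (lead_coef A)).-1.
by rewrite /bcoef -!lead_coefE !lead_coef_eq0.
Qed.

Lemma attainsP A p q a b :
  reflect (forall a' b', bcoef A a' b' != 0 -> wdeg p q a' b' <= wdeg p q a b)
          (attains_max A p q a b).
Proof.
rewrite /attains_max; apply: (iffP idP).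
  move=> H a' b' nz; have [ha hb] := bcoef_out nz.
  move: H; rewrite big_andE => /forallP /(_ (Ordinal ha)) /=.
  rewrite big_andE => /forallP /(_ (Ordinal hb)) /= /implyP; exact.
move=> H; rewrite big_andE; apply/forallP => i /=; rewrite big_andE.
by apply/forallP => j /=; apply/implyP => nz; exact: H.
Qed.

Lemma bcoef_init A p q a b : bcoef (init_form A p q) a b =
  if (bcoef A a b != 0) && attains_max A p q a b then bcoef A a b else 0.
Proof.
rewrite /bcoef /init_form coef_poly; case: ltnP => ha.
  rewrite coef_poly /xcoef; case: ltnP => hb //.
  by rewrite [(A`_a)`_b]nth_default // eqxx.
by rewrite [A`_a]nth_default // coef0 eqxx.
Qed.

Lemma init_coef A p q (m : C) a0 b0 :
  bcoef A a0 b0 != 0 -> wdeg p q a0 b0 = m ->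
  (forall a b, bcoef A a b != 0 -> wdeg p q a b <= m) ->
  forall a b, bcoef (init_form A p q) a b =
     if wdeg p q a b == m then bcoef A a b else 0.
Proof.
move=> nz0 e0 bd a b; rewrite bcoef_init.
have [z|nz] := eqVneq (bcoef A a b) 0; first by rewrite z if_same.
rewrite /=; congr (if _ then _ else _).
apply/idP/idP.
  move/attainsP => H; have := H _ _ nz0; rewrite e0 => h1.
  by rewrite eq_le h1 bd.
move/eqP => e; apply/attainsP => a' b' nz'; rewrite e; exact: bd.
Qed.

Lemma seq_max (T : eqType) (s : seq T) (w : T -> C) x0 :
  (forall x, w x \is Num.real) -> x0 \in s ->
  exists2 x, x \in s & forall y, y \in s -> w y <= w x.
Proof.
move=> wr; elim: s x0 => [//|x s IH] x0 _.
case: s IH => [|z s] IH.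
  by exists x; rewrite ?mem_head // => y; rewrite inE => /eqP ->.
have [m ms hm] := IH z (mem_head _ _).
have /orP [le|le] := real_leVge (wr x) (wr m).
  exists m; first by rewrite inE ms orbT.
  by move=> y; rewrite inE => /orP [/eqP ->|]; [exact: le | exact: hm].
exists x; first exact: mem_head.
move=> y; rewrite inE => /orP [/eqP ->|/hm h]; [exact: lexx | exact: le_trans h le].
Qed.

Lemma wdeg_real (p q : C) a b : p \is Num.real -> q \is Num.real ->
  wdeg p q a b \is Num.real.
Proof. by move=> pr qr; rewrite /wdeg realD ?realM ?realn. Qed.

Lemma exists_max A (p q : C) : p \is Num.real -> q \is Num.real -> A != 0 ->
  exists a0 b0, bcoef A a0 b0 != 0 /\
    forall a b, bcoef A a b != 0 -> wdeg p q a b <= wdeg p q a0 b0.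
Proof.
move=> pr qr A0.
set N := (\max_(i < size A) size (xcoef A i))%N.
set s := [seq x <- [seq (i, j) | i <- iota 0 (size A), j <- iota 0 N]
          | bcoef A x.1 x.2 != 0].
have ins : forall a b, bcoef A a b != 0 -> (a, b) \in s.
  move=> a b nz; have [ha hb] := bcoef_out nz.
  rewrite mem_filter nz /=; apply: allpairs_f; rewrite mem_iota //=.
  rewrite add0n; apply: leq_trans hb _; exact: (@leq_bigmax _ (fun i : 'I_(size A) => size (xcoef A i)) (Ordinal ha)).
have [a1 [b1 nz1]] := poly_nz_bcoef A0.
have [[a0 b0] m0 hm] := @seq_max _ s (fun x : nat * nat => wdeg p q x.1 x.2) _ (fun x : nat * nat => wdeg_real x.1 x.2 pr qr)
   (ins _ _ nz1).
exists a0, b0; split; first by move: m0; rewrite mem_filter => /andP [].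
by move=> a b nz; exact: (hm (a, b) (ins _ _ nz)).
Qed.

Lemma sum_eq (x y mA mB : C) : x <= mA -> y <= mB -> x + y = mA + mB ->
  x = mA /\ y = mB.
Proof.
move=> hx hy e.
have ex : x = mA.
  apply/eqP; apply: contraT => ne.
  have lt : x < mA by rewrite lt_neqAle ne hx.
  by have := ltr_leD lt hy; rewrite e ltxx.
by split=> //; move: e; rewrite ex => /addrI.
Qed.

Lemma wdegB (p q : C) a b i j : (i <= a)%N -> (j <= b)%N ->
  wdeg p q i j + wdeg p q (a - i) (b - j) = wdeg p q a b.
Proof. by move=> ha hb; rewrite /wdeg !natrB //; ring. Qed.

Lemma sum_neq0_ex n (F : 'I_n -> C) : \sum_i F i != 0 -> exists i, F i != 0.
Proof.
move=> nz; case: (classic (exists i, F i != 0)) => // H.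
move: nz; rewrite big1 ?eqxx // => i _; apply/eqP/negPn/negP => hi.
by apply: H; exists i.
Qed.

Lemma init_mul A B (p q : C) : p \is Num.real -> q \is Num.real -> A != 0 -> B != 0 ->
  init_form (A * B) p q = init_form A p q * init_form B p q.
Proof.
move=> pr qr A0 B0.
have [a0 [b0 [nzA bdA]]] := exists_max pr qr A0.
have [a0' [b0' [nzB bdB]]] := exists_max pr qr B0.
set mA := wdeg p q a0 b0; set mB := wdeg p q a0' b0'.
have iA := init_coef nzA (erefl mA) bdA.
have iB := init_coef nzB (erefl mB) bdB.
have key : forall a b, bcoef (init_form A p q * init_form B p q) a b =
    if wdeg p q a b == mA + mB then bcoef (A * B) a b else 0.
  move=> a b; rewrite !bcoefM; case: ifP => hW.
    apply: eq_bigr => i _; apply: eq_bigr => j _; rewrite iA iB.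
    have [z|nzi] := eqVneq (bcoef A i j) 0; first by rewrite z if_same !mul0r.
    have [z|nzj] := eqVneq (bcoef B (a - i) (b - j)) 0.
      by rewrite z if_same !mulr0.
    have [e1 e2] := sum_eq (bdA _ _ nzi) (bdB _ _ nzj)
      (etrans (@wdegB p q a b i j (ltn_ord i) (ltn_ord j)) (eqP hW)).
    by rewrite e1 e2 !eqxx.
  rewrite big1 // => i _; rewrite big1 // => j _; rewrite iA iB.
  case: eqP => e1; case: eqP => e2; rewrite ?mul0r ?mulr0 //.
  by move: hW; rewrite -(@wdegB p q a b i j (ltn_ord i) (ltn_ord j)) e1 e2 eqxx.
have bdAB : forall a b, bcoef (A * B) a b != 0 -> wdeg p q a b <= mA + mB.
  move=> a b; rewrite bcoefM => /sum_neq0_ex [i /sum_neq0_ex [j]].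
  rewrite mulf_eq0 negb_or => /andP [nzi nzj].
  rewrite -(@wdegB p q a b i j (ltn_ord i) (ltn_ord j)); exact: lerD (bdA _ _ nzi) (bdB _ _ nzj).
have iA0 : init_form A p q != 0.
  by apply: (@bcoef_nz_poly _ a0 b0); rewrite iA eqxx.
have iB0 : init_form B p q != 0.
  by apply: (@bcoef_nz_poly _ a0' b0'); rewrite iB eqxx.
have [a1 [b1 nz1]] := poly_nz_bcoef (mulf_neq0 iA0 iB0).
move: (nz1); rewrite key; case: ifP => [/eqP e1 nzAB|_]; last by rewrite eqxx.
have iAB := init_coef nzAB e1 bdAB.
by apply: beq => a b; rewrite iAB key.
Qed.

Lemma dY_horner (F : P) x : (dY F).[x%:P] = (F.[x%:P])^`().
Proof.
rewrite /dY (@horner_coef_wide _ (size F)); last exact: size_poly.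
rewrite horner_coef raddf_sum; apply: eq_bigr => i _.
by rewrite coef_map_id0 ?deriv0 // /= -rmorphXn derivM derivC mulr0 addr0.
Qed.

Lemma eval3 (A B D : P) x y : (B.[x%:P]).[y] = 0 -> (D.[x%:P]).[y] = 0 ->
  (A * B * D).[x, y] = 0 /\ (dX (A * B * D)).[x, y] = 0 /\
  (dY (A * B * D)).[x, y] = 0.
Proof.
move=> hB hD; split; [|split].
- by rewrite !hornerM hD mulr0.
- rewrite /dX !derivM !(hornerD, hornerM) hB hD.
  by rewrite !(mulr0, mul0r, addr0, add0r).
- rewrite dY_horner !hornerM !derivM !(hornerD, hornerM) hB hD.
  by rewrite !(mulr0, mul0r, addr0, add0r).
Qed.

End Init.

Section Main.
Variable C : numClosedFieldType.
Local Notation P := {poly {poly C}}.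

Lemma qc_div (f g k : P) : quasi_convenient f -> (0 < tdeg g)%N -> f = k * g ->
  quasi_convenient g.
Proof.
move=> [f0 [_ [[a fa] [b fb]]]] tg ef.
have g0 : g != 0 by apply: contraNneq f0 => hh; rewrite ef hh mulr0.
split=> //; split=> //; split.
  case: (classic (exists a, bcoef g a 0 != 0)) => // H; exfalso.
  have Hg : forall c, bcoef g c 0 = 0.
    by move=> c; apply/eqP/negPn/negP => hc; apply: H; exists c.
  move: fa; rewrite ef bcoefM big1 ?eqxx // => i _.
  by rewrite big_ord1 Hg mulr0.
case: (classic (exists b, bcoef g 0 b != 0)) => // H; exfalso.
have Hg : forall c, bcoef g 0 c = 0.
  by move=> c; apply/eqP/negPn/negP => hc; apply: H; exists c.
move: fb; rewrite ef bcoefM big_ord1 big1 ?eqxx // => j _.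
by rewrite Hg mulr0.
Qed.

End Main.

Theorem lemma3p1 (C : numClosedFieldType) (f g h : {poly {poly C}}) :
  nondeg_at_infinity f ->
  (0 < tdeg g)%N -> (0 < tdeg h)%N ->
  bcoprime g h -> bdvd g f -> bdvd h f ->
  quasi_convenient g /\ quasi_convenient h /\ pair_nondeg_at_infinity g h.
Proof.
move=> [qf nd] tg th cop dg dh.
have f0 : f != 0 by case: qf.
have [n ef] := prod_dvd f0 cop dg dh.
have qg : quasi_convenient g by apply: (qc_div qf tg ef).
have qh : quasi_convenient h.
  by apply: (qc_div qf th (k := n * g)); rewrite ef mulrAC.
have n0 : n != 0 by apply: contraNneq f0 => hh; rewrite ef hh !mul0r.
have g0 : g != 0 by case: qg.
have h0 : h != 0 by case: qh.
split=> //; split=> //; split=> //; split=> //.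
move=> p q wok [x [y [x0 [y0 [eg eh]]]]].
apply: (nd p q wok); exists x, y; split=> //; split=> //.
have [pr [qr _]] := wok.
rewrite ef !init_mul // ?mulf_neq0 //.
exact: eval3.
Qed.
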